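(* Let $n,d\in\mathbb{N}$ with $\frac1n+\frac1d<1$ and $n\neq d$, let $m=n+d$, and let $\lambda\in W$ with $\psi=\operatorname{Arg}(\lambda)$. Let $\varepsilon>0$ be chosen as described in the context, and let $V_\lambda'$ be the region bounded by the two rays $\operatorname{Arg} z=\frac{\psi\pm\pi}{m}$ and the two curves $\widehat\gamma_n,\widehat\gamma_d$. Let \[\widehat U_\lambda=\left\{z\in\mathbb{C}: |z|<2+\varepsilon,\ \theta_2<\operatorname{Arg}(z)<\theta_1\right\},\] where \[\theta_1=\min\left\{\tfrac{n\psi+d\pi}{m},\ \tfrac{n\psi-d\pi}{m}+\pi\right\},\qquad \theta_2=\max\left\{\tfrac{n\psi-d\pi}{m},\ \tfrac{n\psi+d\pi}{m}-\pi\right\}.\] Then $V_\lambda'\subset \widehat U_\lambda$.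
   Context: $F_\lambda(z)=z^n+\lambda/z^d$ on the Riemann sphere, with $\lambda\in\mathbb{C}$. $W$ is the closed polar rectangle of $\lambda$-values in the right half-plane bounded by arcs of the circles $|\lambda|=\frac nd\left(\frac{d}{2m}\right)^{\frac{md}{nd-m}}$ and $|\lambda|=\frac nd\left(\frac{2d}{m}\right)^{\frac mn}$ and by portions of the rays $\operatorname{Arg}(\lambda)=\pm\frac{\pi}{n-1}$. $B_\lambda$ is the immediate attracting basin of the superattracting fixed point $\infty$, and the trap door $T_\lambda$ is the component of $F_\lambda^{-1}(B_\lambda)$ containing $0$. $\Gamma$ is the circle $|z|=2$ and $\mu$ is the circle $|z|=\frac12\left(\frac{d|\lambda|}{n}\right)^{1/d}$. $\gamma_d$ is the preimage of $\Gamma$ under $F_\lambda$ lying in $T_\lambda$ (outside $\mu$), and $\gamma_n$ is the preimage of $\Gamma$ lying in $B_\lambda$ (inside $\Gamma$). For compact sets $\alpha,\beta$, $d(\alpha,\beta)$ is the minimal Euclidean distance between points of $\alpha$ and $\beta$. Fix $\delta_1,\delta_2>0$ with $d(\Gamma,\gamma_n)>\delta_1$ and $d(\mu,\gamma_d)>\delta_2$. For $\varepsilon>0$, $\widehat\Gamma$ is the circle $|z|=2+\varepsilon$, and $\widehat\gamma_n\subset B_\lambda$, $\widehat\gamma_d\subset T_\lambda$ are the preimages of $\widehat\Gamma$ under $F_\lambda$ in $B_\lambda$ and $T_\lambda$ respectively; $\varepsilon$ is chosen small enough that $d(\widehat\gamma_n,\gamma_n)<\frac12\min(\delta_1,\delta_2)$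 and $d(\widehat\gamma_d,\gamma_d)<\frac12\min(\delta_1,\delta_2)$. *)

(* Defs.v *)
From Stdlib Require Import Reals.
From Coquelicot Require Import Coquelicot.
Open Scope R_scope.

(* The point at infinity of the Riemann sphere is [None]; [Some z] is z in C. *)
Definition sphere := option C.

Definition F (n d : nat) (lam : C) (z : sphere) : sphere :=
  match z with
  | None => None
  | Some z0 =>
      if Req_EM_T (Cmod z0) 0 then None
      else Some (Cplus (Cpow z0 n) (Cdiv lam (Cpow z0 d)))
  end.

Fixpoint Fiter (n d : nat) (lam : C) (k : nat) (z : sphere) : sphere :=
  match k with
  | O => z
  | S k' => F n d lam (Fiter n d lam k' z)
  end.

Definition tends_to_infinity (u : nat -> sphere) : Prop :=
  forall M : R, exists N : nat, forall k, (N <= k)%nat ->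
    match u k with None => True | Some w => M < Cmod w end.

Definition basin_inf (n d : nat) (lam : C) (z : C) : Prop :=
  tends_to_infinity (fun k => Fiter n d lam k (Some z)).

Definition connected_set (S : C -> Prop) : Prop :=
  forall U V : C -> Prop, open U -> open V ->
    (forall z, S z -> U z \/ V z) ->
    (forall z, S z -> U z -> V z -> False) ->
    (exists z, S z /\ U z) -> (exists z, S z /\ V z) -> False.

Definition unbounded (S : C -> Prop) : Prop :=
  forall M : R, exists z, S z /\ M < Cmod z.

(* Finite part of the immediate basin B_lambda of oo: the component of the
   basin containing oo.  Removing oo from it leaves the (unique) unbounded
   connected component of (basin \cap C). *)
Definition B_fin (n d : nat) (lam : C) (z : C) : Prop :=
  exists S : C -> Prop, connected_set S /\ unbounded S /\ S z /\
    forall w, S w -> basin_inf n d lam w.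

(* Finite part of F^{-1}(B_lambda): 0 (mapped to oo) and the z <> 0 with
   F(z) in B_lambda \cap C. *)
Definition preB_fin (n d : nat) (lam : C) (z : C) : Prop :=
  match F n d lam (Some z) with
  | None => True
  | Some w => B_fin n d lam w
  end.

(* Trap door T_lambda: component of F^{-1}(B_lambda) containing 0 (its
   finite part). *)
Definition T_fin (n d : nat) (lam : C) (z : C) : Prop :=
  exists S : C -> Prop, connected_set S /\ S 0%C /\ S z /\
    forall w, S w -> preB_fin n d lam w.

Definition preimage_circle (n d : nat) (lam : C) (r : R) (A : C -> Prop)
    (z : C) : Prop :=
  A z /\ exists w, F n d lam (Some z) = Some w /\ Cmod w = r.

Definition circle (r : R) (z : C) : Prop := Cmod z = r.

(* Minimal distance between (compact) sets: d(A,B) > delta and d(A,B) < c,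
   written out as properties of the infimum of |a - b|. *)
Definition setdist_gt (A B : C -> Prop) (delta : R) : Prop :=
  exists delta', delta < delta' /\
    forall a b, A a -> B b -> delta' <= Cmod (Cminus a b).
Definition setdist_lt (A B : C -> Prop) (c : R) : Prop :=
  exists a b, A a /\ B b /\ Cmod (Cminus a b) < c.

Definition IsArg (z : C) (theta : R) : Prop :=
  z <> 0%C /\ - PI < theta <= PI /\
  z = Cmult (RtoC (Cmod z)) (cos theta, sin theta).

Definition W (n d : nat) (lam : C) : Prop :=
  let m := (n + d)%nat in
  let r1 := INR n / INR d *
            Rpower (INR d / (2 * INR m)) (INR m * INR d / (INR n * INR d - INR m)) in
  let r2 := INR n / INR d * Rpower (2 * INR d / INR m) (INR m / INR n) in
  r1 <= Cmod lam <= r2 /\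
  exists psi, IsArg lam psi /\ - (PI / (INR n - 1)) <= psi <= PI / (INR n - 1).

(* Interior of a closed curve gamma (component of C \ gamma containing 0)
   and exterior (unbounded part of C \ gamma). *)
Definition inside_curve (gamma : C -> Prop) (z : C) : Prop :=
  exists S : C -> Prop, connected_set S /\ S 0%C /\ S z /\
    forall w, S w -> ~ gamma w.
Definition outside_curve (gamma : C -> Prop) (z : C) : Prop :=
  exists S : C -> Prop, connected_set S /\ unbounded S /\ S z /\
    forall w, S w -> ~ gamma w.

Definition Vprime (m : nat) (psi : R) (gn gd : C -> Prop) (z : C) : Prop :=
  (exists t, IsArg z t /\ (psi - PI) / INR m < t < (psi + PI) / INR m) /\
  ~ gn z /\ ~ gd z /\ ~ outside_curve gn z /\ ~ inside_curve gd z.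

Definition Uhat (eps theta1 theta2 : R) (z : C) : Prop :=
  Cmod z < 2 + eps /\ exists t, IsArg z t /\ theta2 < t < theta1.

(* Main.v *)
Require Import Defs.
From Stdlib Require Import Reals.
From Coquelicot Require Import Coquelicot.
Open Scope R_scope.
From Stdlib Require Import Lra Lia Classical Arith ZArith.

Lemma interval_conn (a b : R) (P Q : R -> Prop) :
  a <= b -> (forall s, a <= s <= b -> P s \/ Q s) ->
  (forall s, a <= s <= b -> P s -> exists e, 0 < e /\
     forall t, a <= t <= b -> Rabs (t - s) < e -> P t) ->
  (forall s, a <= s <= b -> Q s -> exists e, 0 < e /\
     forall t, a <= t <= b -> Rabs (t - s) < e -> Q t) ->
  P a -> Q b -> exists s, a <= s <= b /\ P s /\ Q s.
Proof.
  intros hab cov oP oQ Pa Qb.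
  set (E := fun s => a <= s <= b /\ forall t, a <= t <= s -> P t).
  assert (bE : bound E) by (exists b; intros x [hx _]; lra).
  assert (nE : exists x, E x).
  { exists a; split; [lra|]. intros t ht. replace t with a by lra; exact Pa. }
  destruct (completeness E bE nE) as [c [ub lub]].
  assert (ca : a <= c) by (apply ub; destruct nE; unfold E; split; [lra|];
    intros t ht; replace t with a by lra; exact Pa).
  assert (cb : c <= b) by (apply lub; intros x [hx _]; lra).
  assert (A : forall t, a <= t < c -> P t).
  { intros t ht. apply NNPP; intro np.
    assert (c <= t); [|lra]. apply lub. intros x [hx hx2].
    destruct (Rle_lt_dec x t) as [h|h]; [exact h|]. exfalso; apply np, hx2; lra. }
  destruct (cov c (conj ca cb)) as [Pc|Qc].
  - destruct (Req_dec c b) as [->|cnb].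
    + exists b; repeat split; auto; lra.
    + destruct (oP c (conj ca cb) Pc) as [e [e0 he]].
      set (t' := Rmin b (c + e/2)).
      assert (c < t') by (unfold t', Rmin; destruct Rle_dec; lra).
      assert (t' <= b) by (unfold t', Rmin; destruct Rle_dec; lra).
      assert (t' <= c + e/2) by (unfold t', Rmin; destruct Rle_dec; lra).
      assert (t' <= c); [|lra].
      apply ub. split; [lra|]. intros t ht.
      destruct (Rlt_le_dec t c) as [h|h]; [apply A; lra|].
      apply he; [lra|]. rewrite Rabs_right; lra.
  - destruct (Req_dec c a) as [->|cna].
    + exists a; repeat split; auto; lra.
    + destruct (oQ c (conj ca cb) Qc) as [e [e0 he]].
      set (t := Rmax a (c - e/2)).
      assert (t < c) by (unfold t, Rmax; destruct Rle_dec; lra).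
      assert (a <= t) by (unfold t, Rmax; destruct Rle_dec; lra).
      assert (c - e/2 <= t) by (unfold t, Rmax; destruct Rle_dec; lra).
      exists t; split; [lra|split].
      * apply A; lra.
      * apply he; [lra|]. rewrite Rabs_left; lra.
Qed.

Lemma ray_open (u : C) (U : C -> Prop) : Cmod u = 1 -> open U ->
  forall s, U (RtoC s * u)%C -> exists e, 0 < e /\
     forall t, Rabs (t - s) < e -> U (RtoC t * u)%C.
Proof.
  intros hu oU s Us. destruct (oU _ Us) as [eps heps].
  exists eps; split; [apply cond_pos|]. intros t ht. apply heps.
  apply C_NormedModule_mixin_compat1.
  replace (minus (RtoC t * u)%C (RtoC s * u)%C) with (RtoC (t - s) * u)%C.
  - rewrite Cmod_mult, Cmod_R, hu; lra.
  - destruct u as [u1 u2]. unfold minus, plus, opp; simpl.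
    unfold Cplus, Copp, Cmult, RtoC; simpl. f_equal; ring.
Qed.

Lemma ray_conn (u : C) (a : R) : Cmod u = 1 ->
  connected_set (fun w => exists s, a <= s /\ w = (RtoC s * u)%C).
Proof.
  intros hu U V oU oV cov disj [z1 [[s1 [h1 ->]] U1]] [z2 [[s2 [h2 ->]] V2]].
  assert (gen : forall (P Q : C -> Prop), open P -> open Q ->
     (forall s, a <= s -> P (RtoC s * u)%C \/ Q (RtoC s * u)%C) ->
     forall x y, a <= x <= y -> P (RtoC x * u)%C -> Q (RtoC y * u)%C ->
     exists s, a <= s /\ P (RtoC s * u)%C /\ Q (RtoC s * u)%C).
  { intros P Q oP oQ cv x y hxy Px Qy.
    destruct (interval_conn x y (fun s => P (RtoC s * u)%C) (fun s => Q (RtoC s * u)%C))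
      as [s [hs [Ps Qs]]]; try tauto.
    - intros s hs; apply cv; lra.
    - intros s _ Ps. destruct (ray_open u P hu oP s Ps) as [e [e0 he]].
      exists e; split; auto.
    - intros s _ Ps. destruct (ray_open u Q hu oQ s Ps) as [e [e0 he]].
      exists e; split; auto.
    - exists s; split; [lra|auto]. }
  assert (cv' : forall s, a <= s -> U (RtoC s * u)%C \/ V (RtoC s * u)%C)
    by (intros s hs; apply cov; exists s; auto).
  destruct (Rle_lt_dec s1 s2) as [h|h].
  - destruct (gen U V oU oV cv' s1 s2 (conj h1 h) U1 V2) as [s [hs [Us Vs]]].
    apply (disj _ (ex_intro _ s (conj hs eq_refl)) Us Vs).
  - assert (cv2 : forall s, a <= s -> V (RtoC s * u)%C \/ U (RtoC s * u)%C)
      by (intros s hs; destruct (cv' s hs); auto).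
    destruct (gen V U oV oU cv2 s2 s1 (conj h2 (Rlt_le _ _ h)) V2 U1) as [s [hs [Vs Us]]].
    apply (disj _ (ex_intro _ s (conj hs eq_refl)) Us Vs).
Qed.

Lemma dle a b c : 0 < c -> a <= b * c -> a / c <= b.
Proof. intros h1 h2. apply Rmult_le_reg_r with c; auto. unfold Rdiv.
  rewrite Rmult_assoc, Rinv_l by lra. lra. Qed.
Lemma dlt a b c : 0 < c -> a < b * c -> a / c < b.
Proof. intros h1 h2. apply Rmult_lt_reg_r with c; auto. unfold Rdiv.
  rewrite Rmult_assoc, Rinv_l by lra. lra. Qed.
Lemma gedl a b c : 0 < c -> b * c <= a -> b <= a / c.
Proof. intros h1 h2. apply Rmult_le_reg_r with c; auto. unfold Rdiv.
  rewrite Rmult_assoc, Rinv_l by lra. lra. Qed.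

Lemma exp_le_exp_new x y : x <= y -> exp x <= exp y.
Proof. intros [h|h]; [apply Rlt_le, exp_increasing; auto| subst; lra]. Qed.

Lemma r2_bound (n d : nat) : (2 <= n)%nat -> (2 <= d)%nat ->
  INR n / INR d * Rpower (2 * INR d / INR (n + d)) (INR (n + d) / INR n) <= 2 ^ (d + 1).
Proof.
  intros hn hd.
  assert (Hn : 2 <= INR n) by (replace 2 with (INR 2) by (simpl; lra); apply le_INR; lia).
  assert (Hd : 2 <= INR d) by (replace 2 with (INR 2) by (simpl; lra); apply le_INR; lia).
  rewrite plus_INR.
  assert (p2 : 4 <= 2 ^ (d + 1)).
  { replace 4 with (2 ^ 2) by lra. apply Rle_pow; [lra|lia]. }
  assert (bpos : 0 < 2 * INR d / (INR n + INR d)) by (apply Rdiv_lt_0_compat; lra).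
  destruct (le_lt_dec n d) as [h|h].
  - assert (Hnd : INR n <= INR d) by (apply le_INR; lia).
    assert (e1 : INR n / INR d <= 1) by (apply dle; lra).
    assert (b1 : 2 * INR d / (INR n + INR d) <= 2).
    { apply dle; lra. }
    assert (Rpower (2 * INR d / (INR n + INR d)) ((INR n + INR d) / INR n)
            <= Rpower 2 ((INR n + INR d) / INR n)).
    { apply Rle_Rpower_l; [|lra]. apply Rlt_le, Rdiv_lt_0_compat; lra. }
    assert (Rpower 2 ((INR n + INR d) / INR n) <= Rpower 2 (INR (d + 1))).
    { apply Rle_Rpower; [lra|]. rewrite plus_INR; simpl.
      apply dle; nra. }
    rewrite Rpower_pow in H0 by lra.
    assert (0 <= Rpower (2 * INR d / (INR n + INR d)) ((INR n + INR d) / INR n))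
      by (unfold Rpower; apply Rlt_le, exp_pos).
    assert (0 <= INR n / INR d) by (apply Rlt_le, Rdiv_lt_0_compat; lra).
    nra.
  - assert (Hnd : INR d < INR n) by (apply lt_INR; lia).
    assert (b1 : 2 * INR d / (INR n + INR d) < 1).
    { apply dlt; lra. }
    assert (Rpower (2 * INR d / (INR n + INR d)) ((INR n + INR d) / INR n)
            <= 2 * INR d / (INR n + INR d)).
    { unfold Rpower. rewrite <- (exp_ln (2 * INR d / (INR n + INR d))) at 2 by lra.
      apply exp_le_exp_new.
      assert (ln (2 * INR d / (INR n + INR d)) < 0) by (rewrite <- ln_1; apply ln_increasing; lra).
      assert (1 <= (INR n + INR d) / INR n).
      { apply gedl; lra. }
      nra. }
    assert (0 <= INR n / INR d) by (apply Rlt_le, Rdiv_lt_0_compat; lra).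
    assert (INR n / INR d * (2 * INR d / (INR n + INR d)) <= 2).
    { unfold Rdiv. field_simplify; try lra.
      apply dle; lra. }
    nra.
Qed.

Lemma Fgrow (n d : nat) (lam w : C) : (2 <= n)%nat ->
  Cmod lam <= 2 ^ (d + 1) -> 2 < Cmod w ->
  Cmod w < Cmod (Cplus (Cpow w n) (Cdiv lam (Cpow w d))).
Proof.
  intros hn hl hw. set (s := Cmod w) in *.
  assert (w0 : w <> 0%C) by (intro; subst; unfold s in hw; rewrite Cmod_0 in hw; lra).
  assert (wd0 : Cpow w d <> 0%C).
  { intro h. apply (f_equal Cmod) in h. rewrite Cmod_pow, Cmod_0 in h.
    revert h; apply pow_nonzero; unfold s in hw; lra. }
  assert (tri := Cmod_triangle (Cplus (Cpow w n) (Cdiv lam (Cpow w d))) (Copp (Cdiv lam (Cpow w d)))).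
  replace (Cplus (Cplus (Cpow w n) (Cdiv lam (Cpow w d))) (Copp (Cdiv lam (Cpow w d))))
    with (Cpow w n) in tri by (destruct (Cpow w n), (Cdiv lam (Cpow w d)); unfold Cplus, Copp; simpl; f_equal; ring).
  rewrite Cmod_opp, Cmod_div, !Cmod_pow in tri by auto. fold s in tri.
  set (A := s ^ d) in *.
  destruct n as [|[|n1]]; [lia|lia|].
  assert (B2 : 2 <= s ^ S n1).
  { apply Rle_trans with (2 ^ S n1).
    - replace 2 with (2 ^ 1) at 1 by lra. apply Rle_pow; [lra|lia].
    - apply pow_incr; lra. }
  assert (A2 : 2 ^ d <= A) by (apply pow_incr; lra).
  assert (Ap : 0 < 2 ^ d) by (apply pow_lt; lra).
  assert (e : 2 ^ (d + 1) = 2 ^ d * 2) by (rewrite pow_add; ring).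
  set (q := Cmod lam / A) in *.
  assert (qA : q * A = Cmod lam) by (unfold q; field; lra).
  assert (q < s * (s ^ S n1) - s).
  { assert (q * A < (s * (s ^ S n1) - s) * A); [|nra].
    rewrite qA.
    assert (sA : 2 * 2 ^ d < s * A) by nra.
    assert (0 <= s * (s ^ S n1 - 2) * A).
    { apply Rmult_le_pos; [apply Rmult_le_pos|]; lra. }
    nra. }
  replace (s ^ S (S n1)) with (s * s ^ S n1) in tri by reflexivity. lra.
Qed.

Lemma Arg_unique (z : C) a b : 
  (z <> 0%C /\ - PI < a <= PI /\ z = Cmult (RtoC (Cmod z)) (cos a, sin a)) ->
  (z <> 0%C /\ - PI < b <= PI /\ z = Cmult (RtoC (Cmod z)) (cos b, sin b)) -> a = b.
Proof.
  intros [z0 [ha ea]] [_ [hb eb]].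
  assert (m0 : Cmod z <> 0) by (intro h; apply z0, Cmod_eq_0, h).
  rewrite ea in eb at 1.
  unfold Cmult, RtoC in eb; simpl in eb. injection eb; intros e2 e1.
  assert (cc : cos a = cos b) by (apply Rmult_eq_reg_l with (Cmod z); auto; lra).
  assert (ss : sin a = sin b) by (apply Rmult_eq_reg_l with (Cmod z); auto; lra).
  assert (sin (a - b) = 0) by (rewrite sin_minus, cc, ss; ring).
  assert (cos (a - b) = 1) by (rewrite cos_minus, <- cc, <- ss; rewrite Rplus_comm; 
     rewrite <- !Rsqr_pow2 || idtac; pose proof (sin2_cos2 a); unfold Rsqr in *; lra).
  destruct (sin_eq_0_0 _ H) as [k hk].
  assert (PI > 0) by apply PI_RGT_0.
  assert (-2 < IZR k < 2).
  { split.
    - apply Rmult_lt_reg_r with PI; auto. lra.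
    - apply Rmult_lt_reg_r with PI; auto. lra. }
  destruct H2 as [k1 k2]. apply lt_IZR in k1, k2.
  assert (Hk : (k = -1 \/ k = 0 \/ k = 1)%Z) by lia.
  destruct Hk as [ -> | [ -> | -> ] ].
  - rewrite hk in H0. replace (IZR (-1) * PI) with (- PI) in H0 by (simpl; ring).
    rewrite cos_neg, cos_PI in H0. lra.
  - simpl in hk. lra.
  - rewrite hk in H0. replace (IZR 1 * PI) with PI in H0 by (simpl; ring).
    rewrite cos_PI in H0. lra.
Qed.

Theorem proposition4p1 (n d : nat) (lam : C) (psi delta1 delta2 eps : R) :
  (0 < n)%nat -> (0 < d)%nat ->
  / INR n + / INR d < 1 ->
  n <> d ->
  W n d lam ->
  IsArg lam psi ->
  let m := (n + d)%nat in
  let B := B_fin n d lam in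
  let T := T_fin n d lam in
  let Gamma := circle 2 in
  let mu := circle (/ 2 * Rpower (INR d * Cmod lam / INR n) (/ INR d)) in
  let gamma_n := preimage_circle n d lam 2 B in
  let gamma_d := preimage_circle n d lam 2 T in
  let gamma_n_hat := preimage_circle n d lam (2 + eps) B in
  let gamma_d_hat := preimage_circle n d lam (2 + eps) T in
  0 < delta1 -> 0 < delta2 ->
  setdist_gt Gamma gamma_n delta1 ->
  setdist_gt mu gamma_d delta2 ->
  0 < eps ->
  setdist_lt gamma_n_hat gamma_n (/ 2 * Rmin delta1 delta2) ->
  setdist_lt gamma_d_hat gamma_d (/ 2 * Rmin delta1 delta2) ->
  let theta1 := Rmin ((INR n * psi + INR d * PI) / INR m)
                     ((INR n * psi - INR d * PI) / INR m + PI) in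
  let theta2 := Rmax ((INR n * psi - INR d * PI) / INR m)
                     ((INR n * psi + INR d * PI) / INR m - PI) in
  forall z : C, Vprime m psi gamma_n_hat gamma_d_hat z ->
    Uhat eps theta1 theta2 z.
Proof.
  intros hn hd hnd hneq HW Harg m B T Gamma mu gn gd gnh gdh d1 d2 sd1 sd2 heps
    sl1 sl2 th1 th2 z [[t [Ht Htr]] [ngn [ngd [nout nin]]]].
  assert (Hd0 : 0 < INR d) by (apply lt_0_INR; lia).
  assert (n2 : (2 <= n)%nat).
  { destruct (Nat.le_gt_cases 2 n) as [h|h]; auto.
    replace n with 1%nat in hnd by lia. simpl in hnd. rewrite Rinv_1 in hnd.
    assert (0 < / INR d) by (apply Rinv_0_lt_compat; lra). lra. }
  assert (Hn0 : 0 < INR n) by (apply lt_0_INR; lia).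
  assert (d2' : (2 <= d)%nat).
  { destruct (Nat.le_gt_cases 2 d) as [h|h]; auto.
    replace d with 1%nat in hnd by lia. simpl in hnd. rewrite Rinv_1 in hnd.
    assert (0 < / INR n) by (apply Rinv_0_lt_compat; lra). lra. }
  assert (Hn2 : 2 <= INR n) by (replace 2 with (INR 2) by (simpl; lra); apply le_INR; lia).
  assert (Hd2 : 2 <= INR d) by (replace 2 with (INR 2) by (simpl; lra); apply le_INR; lia).
  cbv zeta in HW. destruct HW as [[_ hr2] [psi' [Harg' hpsi']]].
  assert (ep : psi' = psi) by (apply (Arg_unique lam); auto).
  subst psi'.
  assert (hlam : Cmod lam <= 2 ^ (d + 1)).
  { eapply Rle_trans; [exact hr2|]. apply r2_bound; auto. }
  split.
  - apply Rnot_le_lt; intro hz.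
    apply nout.
    set (u := (cos t, sin t) : C).
    assert (hu : Cmod u = 1).
    { unfold u, Cmod; simpl. rewrite !Rmult_1_r.
      pose proof (sin2_cos2 t). unfold Rsqr in *.
      replace (cos t * cos t + sin t * sin t) with 1 by lra. apply sqrt_1. }
    exists (fun w => exists s, Cmod z <= s /\ w = (RtoC s * u)%C).
    split; [apply ray_conn; exact hu|].
    split.
    { intro M. exists (RtoC (Rmax (Cmod z) (M + 1)) * u)%C. split.
      - exists (Rmax (Cmod z) (M + 1)); split; [apply Rmax_l|reflexivity].
      - rewrite Cmod_mult, Cmod_R, hu, Rmult_1_r.
        pose proof (Rmax_r (Cmod z) (M + 1)). pose proof (Cmod_ge_0 z). pose proof (Rmax_l (Cmod z) (M + 1)).
        rewrite Rabs_right; lra. }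
    split.
    { exists (Cmod z); split; [lra|]. exact (proj2 (proj2 Ht)). }
    intros w [s [hs ->]] [_ [w' [hF hw']]].
    assert (hcw : Cmod (RtoC s * u)%C = s).
    { rewrite Cmod_mult, Cmod_R, hu, Rmult_1_r. pose proof (Cmod_ge_0 z).
      rewrite Rabs_right; lra. }
    unfold F in hF. destruct Req_EM_T as [e|e]; [discriminate|].
    injection hF; intro ew.
    assert (G := Fgrow n d lam (RtoC s * u)%C n2 hlam ltac:(lra)).
    rewrite ew in G. lra.
  - exists t. split; [exact Ht|].
    destruct Htr as [tl tr].
    unfold th1, th2, m in *. rewrite plus_INR in *.
    set (M := INR n + INR d) in *.
    assert (M0 : 0 < M) by (unfold M; lra).
    assert (k : forall a b, a <= b -> a / M <= b / M).
    { intros a b h. unfold Rdiv. apply Rmult_le_compat_r; auto.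
      apply Rlt_le, Rinv_0_lt_compat; auto. }
    assert (e1 : (INR n * psi - INR d * PI) / M + PI = (INR n * psi - INR d * PI + M * PI) / M)
      by (field; lra).
    assert (e2 : (INR n * psi + INR d * PI) / M - PI = (INR n * psi + INR d * PI - M * PI) / M)
      by (field; lra).
    rewrite e1, e2.
    destruct Harg as [_ [hp1 _]].
    pose proof PI_RGT_0.
    assert (X1 : (INR n - 1) * psi <= PI).
    { replace PI with ((INR n - 1) * (PI / (INR n - 1))) by (field; lra).
      apply Rmult_le_compat_l; lra. }
    assert (X2 : - PI <= (INR n - 1) * psi).
    { replace (- PI) with ((INR n - 1) * (- (PI / (INR n - 1)))) by (field; lra).
      apply Rmult_le_compat_l; lra. }
    assert (D1 : 2 * PI <= INR d * PI) by (apply Rmult_le_compat_r; lra).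
    assert (P1 : 0 <= (INR n - 1) * (psi + PI)) by (apply Rmult_le_pos; lra).
    assert (P2 : 0 <= (INR n - 1) * (PI - psi)) by (apply Rmult_le_pos; lra).
    unfold M in *.
    split.
    + apply Rmax_lub_lt.
      * eapply Rle_lt_trans; [|exact tl]. apply k. nra.
      * eapply Rle_lt_trans; [|exact tl]. apply k. nra.
    + apply Rmin_glb_lt.
      * eapply Rlt_le_trans; [exact tr|]. apply k. nra.
      * eapply Rlt_le_trans; [exact tr|]. apply k. nra.
Qed.
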